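(* Every embeddable graph is 4-colourable (in the usual sense of proper vertex colouring).
   Context: Let $\mathbb{H}^2=\{(x,y,z)\in\mathbb{R}^3 : x^2+y^2+z^2=1,\ z>0\}$ be the open northern hemisphere. A vector system is a finite subset of $\mathbb{H}^2$. A finite simple undirected graph $H=(V,E)$ is embeddable if there is an injective map $f:V\to\mathbb{H}^2$ such that $f(u)\cdot f(v)=0$ for every edge $\{u,v\}\in E$ (non-adjacent vertices may or may not be sent to orthogonal vectors, but distinct vertices must go to distinct vectors). *)

(* Defs.v *)
From Stdlib Require Import Reals.
From mathcomp Require Import all_boot.

Set Implicit Arguments.
Unset Strict Implicit.
Unset Printing Implicit Defensive.

Definition point3 : Type := (R * R * R)%type.

Definition dot3 (p q : point3) : R :=
  let '(x1, y1, z1) := p in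
  let '(x2, y2, z2) := q in
  Rplus (Rplus (Rmult x1 x2) (Rmult y1 y2)) (Rmult z1 z2).

Definition in_hemisphere (p : point3) : Prop :=
  let '(x, y, z) := p in
  Rplus (Rplus (Rmult x x) (Rmult y y)) (Rmult z z) = R1 /\ Rlt R0 z.

Definition simple_graph (V : finType) (adj : rel V) : Prop :=
  symmetric adj /\ irreflexive adj.

Definition embeddable (V : finType) (adj : rel V) : Prop :=
  exists f : V -> point3,
    (forall v, in_hemisphere (f v)) /\
    injective f /\
    (forall u v, adj u v -> dot3 (f u) (f v) = R0).

Definition colourable (k : nat) (V : finType) (adj : rel V) : Prop :=
  exists c : V -> 'I_k, forall u v, adj u v -> c u <> c v.

(* Main.v *)
Require Import Defs.
From Stdlib Require Import Reals Lra Lia Psatz.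
From mathcomp Require Import all_boot.

Definition sgb (t : R) : nat := if Rle_dec R0 t then 0 else 1.

Definition colp (p : point3) : nat :=
  let '(x, y, z) := p in (sgb x + 2 * sgb y)%nat.

Lemma colp_lt (p : point3) : (colp p < 4)%nat.
Proof. destruct p as [[x y] z]; rewrite /colp /sgb.
  by case: (Rle_dec R0 x); case: (Rle_dec R0 y). Qed.

Lemma same_sign (a b : R) : sgb a = sgb b -> (Rle R0 (Rmult a b)).
Proof. rewrite /sgb. case: (Rle_dec R0 a); case: (Rle_dec R0 b) => // ha hb _; nra. Qed.

Theorem mainTheorem1 (V : finType) (adj : rel V) :
  simple_graph adj -> embeddable adj -> colourable 4 adj.
Proof.
  move=> _ [f [Hh [_ Hd]]].
  exists (fun v => Ordinal (colp_lt (f v))).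
  move=> u v Huv Heq.
  have He : colp (f u) = colp (f v) by move: Heq => [].
  have Hdot := Hd u v Huv.
  have Hu := Hh u; have Hv := Hh v.
  move: He Hdot Hu Hv.
  case: (f u) => [[x1 y1] z1]; case: (f v) => [[x2 y2] z2].
  rewrite /colp /dot3 /in_hemisphere => He Hdot [_ Hz1] [_ Hz2].
  have Hx : sgb x1 = sgb x2.
    move: He; rewrite /sgb.
    by case: (Rle_dec R0 x1); case: (Rle_dec R0 x2); case: (Rle_dec R0 y1); case: (Rle_dec R0 y2).
  have Hy : sgb y1 = sgb y2.
    move: He; rewrite /sgb.
    by case: (Rle_dec R0 x1); case: (Rle_dec R0 x2); case: (Rle_dec R0 y1); case: (Rle_dec R0 y2).
  have h1 := same_sign _ _ Hx; have h2 := same_sign _ _ Hy.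
  have : (Rlt R0 (Rmult z1 z2)) by apply Rmult_lt_0_compat.
  lra.
Qed.
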